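(* Suppose $\eta_j^2L^2B_j<b_j^2$. For the biased batched SVRG (Algorithm 3), $$\Big(b_j-\frac{(1-\lambda)^2\eta_j^2L^2B_j}{b_j}\Big)\mathbb{E}\|\tilde x_j-\tilde x_{j-1}\|^2+2\eta_jB_j\,\mathbb{E}\langle e_j,\tilde x_j-\tilde x_{j-1}\rangle\le-2(1-\lambda)\eta_jB_j\,\mathbb{E}\langle\nabla f(\tilde x_j),\tilde x_j-\tilde x_{j-1}\rangle+2(1-\lambda)^2\eta_j^2B_j\,\mathbb{E}\|\nabla f(\tilde x_j)\|^2+2\eta_j^2B_j\,\mathbb{E}\|e_j\|^2.$$
   Context: Setting: $f(x)=\frac1n\sum_{i=1}^n f_i(x)$ with each $f_i:\mathbb{R}^d\to\mathbb{R}$ differentiable and $L$-smooth: $\|\nabla f_i(x)-\nabla f_i(y)\|\le L\|x-y\|$. For $\mathcal I\subset\{1,\dots,n\}$, $\nabla f_{\mathcal I}(x)=\frac1{|\mathcal I|}\sum_{i\in\mathcal I}\nabla f_i(x)$. $N\sim\mathrm{Geom}(\gamma')$ means $P(N=k)=(1-\gamma')\gamma'^k$, $k\ge0$. Epoch $j$ of the batched SVRG scheme: $\mathcal I_j$ uniformly random of size $B_j$, $g_j=\nabla f_{\mathcal I_j}(\tilde x_{j-1})$, $x^{(j)}_0=\tilde x_{j-1}$; $N_j\sim\mathrm{Geom}(B_j/(B_j+b_j))$ drawn independently (mean $B_j/b_j$); for $k=0,\dots,N_j-1$, $\tilde{\mathcal I}_k$ uniformly random of size $b_j$ and $x^{(j)}_{k+1}=x^{(j)}_k-\eta_jv^{(j)}_k$;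 $\tilde x_j=x^{(j)}_{N_j}$. Algorithm 3 (biased, $0<\lambda<1$): $v^{(j)}_k=(1-\lambda)(\nabla f_{\tilde{\mathcal I}_k}(x^{(j)}_k)-\nabla f_{\tilde{\mathcal I}_k}(x^{(j)}_0))+\lambda g_j$, and $e_j=\lambda\nabla f_{\mathcal I_j}(\tilde x_{j-1})-(1-\lambda)\nabla f(\tilde x_{j-1})$. $\mathbb{E}$ is expectation over all randomness. *)

(* Defs.v *)
From HB Require Import structures.
From mathcomp Require Import all_boot all_order all_algebra.
From mathcomp Require Import all_classical all_reals.
From mathcomp Require Import topology normedtype sequences derive.
Set Implicit Arguments.
Unset Strict Implicit.
Unset Printing Implicit Defensive.
Import Order.TTheory GRing.Theory Num.Theory.
Import numFieldNormedType.Exports.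
Local Open Scope ring_scope.

Definition dotv (R : realType) (d : nat) (u v : 'rV[R]_d) : R :=
  \sum_(k < d) u ord0 k * v ord0 k.
Definition enorm (R : realType) (d : nat) (u : 'rV[R]_d) : R :=
  Num.sqrt (dotv u u).

Definition is_gradient (R : realType) (d : nat)
    (f : 'rV[R]_d -> R) (g : 'rV[R]_d -> 'rV[R]_d) : Prop :=
  forall x, differentiable f x /\ forall v, 'D_v f x = dotv (g x) v.

Definition L_lipschitz_grad (R : realType) (d : nat) (L : R)
    (g : 'rV[R]_d -> 'rV[R]_d) : Prop :=
  forall x y, enorm (g x - g y) <= L * enorm (x - y).

Definition grad_batch (R : realType) (n d : nat)
    (gradf : 'I_n -> 'rV[R]_d -> 'rV[R]_d) (I : {set 'I_n}) (x : 'rV[R]_d)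
    : 'rV[R]_d :=
  (#|I|%:R)^-1 *: \sum_(i in I) gradf i x.

(* grad f (x) = 1/n sum_i grad f_i (x)  (gradient of f = 1/n sum f_i) *)
Definition grad_full (R : realType) (n d : nat)
    (gradf : 'I_n -> 'rV[R]_d -> 'rV[R]_d) (x : 'rV[R]_d) : 'rV[R]_d :=
  (n%:R)^-1 *: \sum_(i < n) gradf i x.

(* expectation of F(S) for S a uniformly random subset of {1..n} of size m *)
Definition unif_avg (R : realType) (n m : nat) (F : {set 'I_n} -> R) : R :=
  (\sum_(S : {set 'I_n} | #|S| == m) F S)
    / (#|[set S : {set 'I_n} | #|S| == m]|)%:R.

(* one inner step of Algorithm 3 with minibatch S, anchor x0, g = g_j:
   x_{k+1} = x_k - eta * ((1-lam)(grad f_S(x_k) - grad f_S(x0)) + lam g) *)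
Definition alg3_step (R : realType) (n d : nat)
    (gradf : 'I_n -> 'rV[R]_d -> 'rV[R]_d) (lam eta : R)
    (x0 g : 'rV[R]_d) (S : {set 'I_n}) (x : 'rV[R]_d) : 'rV[R]_d :=
  x - eta *: ((1 - lam) *: (grad_batch gradf S x - grad_batch gradf S x0)
              + lam *: g).

(* E[F(x_k)] where x_0 = x and x_{i+1} = step S_i x_i, the S_i being
   independent uniformly random subsets of size b *)
Fixpoint inner_exp (R : realType) (n d : nat) (b : nat)
    (step : {set 'I_n} -> 'rV[R]_d -> 'rV[R]_d) (F : 'rV[R]_d -> R)
    (k : nat) (x : 'rV[R]_d) : R :=
  match k with
  | 0 => F x
  | k'.+1 => unif_avg b (fun S => inner_exp b step F k' (step S x))
  end.

Definition geom_param (R : realType) (B b : nat) : R :=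
  B%:R / (B + b)%:R.

Definition geom_pmf (R : realType) (B b : nat) (k : nat) : R :=
  (1 - geom_param R B b) * (geom_param R B b) ^+ k.

(* Expectation, over all the randomness of epoch j (I_j, N_j and the inner
   minibatches), of Phi(I_j, xtilde_j), with xtilde_{j-1} = x0. *)
Definition epoch_exp (R : realType) (n d : nat)
    (gradf : 'I_n -> 'rV[R]_d -> 'rV[R]_d) (lam eta : R) (B b : nat)
    (x0 : 'rV[R]_d) (Phi : {set 'I_n} -> 'rV[R]_d -> R) : R :=
  unif_avg B (fun I =>
    limn (series (fun k =>
      geom_pmf R B b k *
      inner_exp b (alg3_step gradf lam eta x0 (grad_batch gradf I x0))
                (Phi I) k x0))).

(* E || xtilde_j - xtilde_{j-1} ||^2 is finite: for every possible I_j the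
   series defining the expectation over N_j converges. *)
Definition finite_second_moment (R : realType) (n d : nat)
    (gradf : 'I_n -> 'rV[R]_d -> 'rV[R]_d) (lam eta : R) (B b : nat)
    (x0 : 'rV[R]_d) : Prop :=
  forall I : {set 'I_n}, #|I| = B ->
    cvgn (series (fun k =>
      geom_pmf R B b k *
      inner_exp b (alg3_step gradf lam eta x0 (grad_batch gradf I x0))
                (fun x => enorm (x - x0) ^+ 2) k x0)).

Definition err_j (R : realType) (n d : nat)
    (gradf : 'I_n -> 'rV[R]_d -> 'rV[R]_d) (lam : R) (x0 : 'rV[R]_d)
    (I : {set 'I_n}) : 'rV[R]_d :=
  lam *: grad_batch gradf I x0 - (1 - lam) *: grad_full gradf x0.

(* Main.v *)
Require Import Defs.
From HB Require Import structures.
From mathcomp Require Import all_boot all_order all_algebra.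
From mathcomp Require Import all_classical all_reals.
From mathcomp Require Import topology normedtype sequences derive.
From mathcomp Require Import fingroup perm.
From mathcomp Require Import ring lra.
Import Order.TTheory GRing.Theory Num.Theory.
Import numFieldNormedType.Exports.
Set Implicit Arguments.
Unset Strict Implicit.
Local Open Scope ring_scope.
Section Dot.
Variables (R : realType) (d : nat).
Implicit Types (u v w : 'rV[R]_d).

Lemma dotvC u v : dotv u v = dotv v u.
Proof. by apply: eq_bigr => k _; rewrite mulrC. Qed.
Lemma dotvDl u v w : dotv (u + v) w = dotv u w + dotv v w.
Proof. by rewrite /dotv -big_split; apply: eq_bigr => k _; rewrite mxE mulrDl. Qed.
Lemma dotvZl a u v : dotv (a *: u) v = a * dotv u v.
Proof. by rewrite /dotv mulr_sumr; apply: eq_bigr => k _; rewrite mxE mulrA. Qed.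
Lemma dotvNl u v : dotv (- u) v = - dotv u v.
Proof. by rewrite /dotv -sumrN; apply: eq_bigr => k _; rewrite mxE mulNr. Qed.
Lemma dotv0l v : dotv 0 v = 0.
Proof. by rewrite /dotv big1 // => k _; rewrite mxE mul0r. Qed.
Lemma dotvBl u v w : dotv (u - v) w = dotv u w - dotv v w.
Proof. by rewrite dotvDl dotvNl. Qed.
Lemma dotvDr u v w : dotv w (u + v) = dotv w u + dotv w v.
Proof. by rewrite dotvC dotvDl !(dotvC w). Qed.
Lemma dotvZr a u v : dotv v (a *: u) = a * dotv v u.
Proof. by rewrite dotvC dotvZl dotvC. Qed.
Lemma dotvNr u v : dotv v (- u) = - dotv v u.
Proof. by rewrite dotvC dotvNl dotvC. Qed.
Lemma dotvBr u v w : dotv w (u - v) = dotv w u - dotv w v.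
Proof. by rewrite dotvDr dotvNr. Qed.
Lemma dotv0r v : dotv v 0 = 0.
Proof. by rewrite dotvC dotv0l. Qed.
Lemma dotv_suml (I : finType) (P : pred I) (F : I -> 'rV[R]_d) v :
  dotv (\sum_(i | P i) F i) v = \sum_(i | P i) dotv (F i) v.
Proof. exact: (big_morph (fun u => dotv u v) (fun x y => dotvDl x y v) (dotv0l v)). Qed.
Lemma dotv_sumr (I : finType) (P : pred I) (F : I -> 'rV[R]_d) v :
  dotv v (\sum_(i | P i) F i) = \sum_(i | P i) dotv v (F i).
Proof. rewrite dotvC dotv_suml; apply: eq_bigr => i _; exact: dotvC. Qed.
Lemma dotv_ge0 u : 0 <= dotv u u.
Proof. by apply: sumr_ge0 => k _; rewrite -expr2 sqr_ge0. Qed.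
Lemma enorm2 u : enorm u ^+ 2 = dotv u u.
Proof. by rewrite /enorm sqr_sqrtr // dotv_ge0. Qed.
Lemma dotv_sq2 u v : dotv (u + v) (u + v) <= 2 * dotv u u + 2 * dotv v v.
Proof.
have := dotv_ge0 (u - v).
rewrite !dotvBl !dotvBr !dotvDl !dotvDr (dotvC v u).
move=> h; lra.
Qed.
Lemma dotv_abs u v : `|dotv u v| <= (dotv u u + dotv v v) / 2.
Proof.
have h1 := dotv_ge0 (u - v); have h2 := dotv_ge0 (u + v).
rewrite !dotvBl !dotvBr !dotvDl !dotvDr (dotvC v u) in h1 h2.
rewrite ler_norml; apply/andP; split; lra.
Qed.
End Dot.
Section Avg.
Variables (R : realType) (n : nat).
Implicit Types (F G : {set 'I_n} -> R).

Lemma avgD m F G : unif_avg m (fun S => F S + G S) = unif_avg m F + unif_avg m G.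
Proof. by rewrite /unif_avg big_split mulrDl. Qed.
Lemma avgZ m a F : unif_avg m (fun S => a * F S) = a * unif_avg m F.
Proof. by rewrite /unif_avg -mulr_sumr mulrA. Qed.
Lemma avg_le m F G : (forall S : {set 'I_n}, #|S| = m -> F S <= G S) ->
  unif_avg m F <= unif_avg m G.
Proof.
move=> h; rewrite /unif_avg; apply: ler_wpM2r; first by rewrite invr_ge0 ler0n.
by apply: ler_sum => S /eqP; apply: h.
Qed.
Lemma NS_gt0 m : (m <= n)%N -> (0 : R) < (#|[set S : {set 'I_n} | #|S| == m]|)%:R.
Proof. by move=> h; rewrite card_draws card_ord ltr0n bin_gt0. Qed.
Lemma avg_cst m c : (m <= n)%N -> @unif_avg R n m (fun _ => c) = c.
Proof.
move=> h; rewrite /unif_avg.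
rewrite (eq_bigl (fun S => S \in [set S : {set 'I_n} | #|S| == m])); last first.
  by move=> S; rewrite inE.
rewrite sumr_const -[c *+ _]mulr_natr -mulrA divff ?mulr1 //.
by rewrite gt_eqF // NS_gt0.
Qed.
End Avg.
Section Comb.
Variables (R : realType) (n d b : nat).

Definition cnt1 (i : 'I_n) : R :=
  \sum_(S : {set 'I_n} | #|S| == b) ((i \in S)%:R : R).
Definition cnt2 (i j : 'I_n) : R :=
  \sum_(S : {set 'I_n} | #|S| == b) (((i \in S) && (j \in S))%:R : R).
Definition NS : R := (#|[set S : {set 'I_n} | #|S| == b]|)%:R.

Lemma sum_cstS (x : R) : \sum_(S : {set 'I_n} | #|S| == b) x = NS * x.
Proof.
rewrite /NS (eq_bigl (fun S => S \in [set S : {set 'I_n} | #|S| == b])); last first.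
  by move=> S; rewrite inE.
by rewrite sumr_const mulr_natl.
Qed.

Lemma sum_perm (s : {perm 'I_n}) (F : {set 'I_n} -> R) :
  \sum_(S : {set 'I_n} | #|S| == b) F (s @: S) =
  \sum_(S : {set 'I_n} | #|S| == b) F S.
Proof.
rewrite [RHS](reindex_inj (imset_inj (@perm_inj _ s))).
by apply: eq_bigl => S; rewrite card_imset //; exact: perm_inj.
Qed.

Lemma cnt1_perm (s : {perm 'I_n}) i : cnt1 (s i) = cnt1 i.
Proof.
rewrite /cnt1 -[LHS](sum_perm s); apply: eq_bigr => S _.
by rewrite mem_imset //; exact: perm_inj.
Qed.
Lemma cnt2_perm (s : {perm 'I_n}) i j : cnt2 (s i) (s j) = cnt2 i j.
Proof.
rewrite /cnt2 -[LHS](sum_perm s); apply: eq_bigr => S _.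
by rewrite !mem_imset //; exact: perm_inj.
Qed.
Lemma cnt1_const i j : cnt1 i = cnt1 j.
Proof. by rewrite -(cnt1_perm (tperm i j) i) tpermL. Qed.
Lemma cnt2_diag i : cnt2 i i = cnt1 i.
Proof. by apply: eq_bigr => S _; rewrite andbb. Qed.
Lemma cnt2_const i j k l : i != j -> k != l -> cnt2 i j = cnt2 k l.
Proof.
move=> hij hkl.
have e1 := cnt2_perm (tperm i k) i j; rewrite tpermL in e1.
set j' := tperm i k j in e1.
have hj' : j' != k.
  apply/negP => /eqP e; move: hij; rewrite eq_sym; apply/negP/negPn/eqP.
  apply: (@perm_inj _ (tperm i k)); by rewrite tpermL.
have e2 := cnt2_perm (tperm j' l) k j'.
rewrite tpermL tpermD // in e2; last by rewrite eq_sym.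
by rewrite -e1 -e2.
Qed.
Lemma cnt_ge0 i j : 0 <= cnt2 i j.
Proof. by apply: sumr_ge0 => S _; rewrite ler0n. Qed.

Lemma sum_mem (S : {set 'I_n}) : \sum_i ((i \in S)%:R : R) = #|S|%:R.
Proof.
rewrite -sumr_const [RHS]big_mkcond /=; apply: eq_bigr => i _.
by case: (i \in S).
Qed.

Lemma sum_cnt1 : \sum_i cnt1 i = NS * b%:R.
Proof.
rewrite /cnt1 exchange_big /=.
rewrite (eq_bigr (fun _ => b%:R)); last by move=> S /eqP <-; exact: sum_mem.
rewrite /NS (eq_bigl (fun S => S \in [set S : {set 'I_n} | #|S| == b])); last first.
  by move=> S; rewrite inE.
by rewrite sumr_const mulr_natl.
Qed.

Lemma cnt1_val i : cnt1 i * n%:R = NS * b%:R.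
Proof.
rewrite -sum_cnt1 (eq_bigr (fun _ => cnt1 i)); last by move=> j _; exact: cnt1_const.
by rewrite sumr_const card_ord mulr_natr.
Qed.

Lemma sum1 (w : 'I_n -> 'rV[R]_d) :
  \sum_(S : {set 'I_n} | #|S| == b) \sum_(i in S) w i = \sum_i cnt1 i *: w i.
Proof.
under eq_bigr do rewrite big_mkcond /=.
rewrite exchange_big /=; apply: eq_bigr => i _.
rewrite /cnt1 scaler_suml; apply: eq_bigr => S _.
by case: (i \in S); rewrite ?scale1r ?scale0r.
Qed.

Lemma sum2 (w : 'I_n -> 'rV[R]_d) :
  \sum_(S : {set 'I_n} | #|S| == b)
     dotv (\sum_(i in S) w i) (\sum_(i in S) w i) =
  \sum_i \sum_j cnt2 i j * dotv (w i) (w j).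
Proof.
have e : forall S : {set 'I_n}, dotv (\sum_(i in S) w i) (\sum_(i in S) w i) =
   \sum_i \sum_j (((i \in S) && (j \in S))%:R * dotv (w i) (w j)).
  move=> S; rewrite dotv_suml big_mkcond /=; apply: eq_bigr => i _.
  rewrite dotv_sumr big_mkcond /=.
  case: (i \in S) => /=.
    by apply: eq_bigr => j _; case: (j \in S); rewrite ?mul1r ?mul0r.
  by rewrite big1 // => j _; rewrite mul0r.
under eq_bigr do rewrite e.
rewrite exchange_big /=; apply: eq_bigr => i _.
rewrite exchange_big /=; apply: eq_bigr => j _.
by rewrite /cnt2 mulr_suml.
Qed.
End Comb.

Definition mean {R : realType} {n d : nat} (S : {set 'I_n}) (w : 'I_n -> 'rV[R]_d) :=
  (#|S|%:R)^-1 *: \sum_(i in S) w i.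
Definition wbar {R : realType} {n d : nat} (w : 'I_n -> 'rV[R]_d) :=
  (n%:R)^-1 *: \sum_i w i.

Section Var.
Variables (R : realType) (n d b : nat).
Hypotheses (hb : (0 < b)%N) (hbn : (b <= n)%N).

Let c1 : R := @NS R n b * b%:R / n%:R.

Lemma n_gt0 : (0 < n)%N.
Proof. exact: leq_trans hb hbn. Qed.

Lemma cnt1E i : @cnt1 R n b i = c1.
Proof.
have hn : (n%:R : R) != 0 by rewrite pnatr_eq0 -lt0n n_gt0.
by rewrite /c1 -(@cnt1_val R n b i) mulfK.
Qed.

Lemma avg_eq m (F G : {set 'I_n} -> R) :
  (forall S : {set 'I_n}, #|S| = m -> F S = G S) -> unif_avg m F = unif_avg m G.
Proof. by move=> h; rewrite /unif_avg; congr (_ / _); apply: eq_bigr => S /eqP /h. Qed.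

Lemma V1 (w : 'I_n -> 'rV[R]_d) c y :
  unif_avg b (fun S => dotv (mean S w + c) y) = dotv (wbar w + c) y.
Proof.
have hn : (n%:R : R) != 0 by rewrite pnatr_eq0 -lt0n n_gt0.
have hb0 : (b%:R : R) != 0 by rewrite pnatr_eq0 -lt0n hb.
have hN : @NS R n b != 0 by rewrite gt_eqF // NS_gt0.
rewrite /unif_avg.
rewrite (eq_bigr (fun S : {set 'I_n} => (b%:R)^-1 * dotv (\sum_(i in S) w i) y + dotv c y)); last first.
  by move=> S /eqP hS; rewrite /mean hS dotvDl dotvZl.
rewrite big_split /= -mulr_sumr -dotv_suml sum1.
rewrite (eq_bigr (fun i => c1 *: w i)); last by move=> i _; rewrite cnt1E.
rewrite -scaler_sumr dotvZl sum_cstS.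
rewrite -/(@NS R n b) /wbar dotvDl dotvZl /c1.
field.
by rewrite hN hn hb0.
Qed.

Lemma cnt2_form : exists c2 : R, 0 <= c2 /\
  forall i j, @cnt2 R n b i j = c2 + (i == j)%:R * (c1 - c2).
Proof.
case: (pselect (exists i j : 'I_n, i != j)) => [[i0 [j0 h0]]|hno].
  exists (@cnt2 R n b i0 j0); split; first exact: cnt_ge0.
  move=> i j; have [->|hij] := eqVneq i j.
    by rewrite cnt2_diag cnt1E mul1r addrC subrK.
  by rewrite mul0r addr0; apply: cnt2_const.
exists 0; split => // i j.
have -> : i = j.
  by apply: contra_notP hno => hij; exists i, j; apply/eqP.
by rewrite eqxx mul1r subr0 add0r cnt2_diag cnt1E.
Qed.

Lemma V2 (w : 'I_n -> 'rV[R]_d) : \sum_i w i = 0 ->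
  \sum_(S : {set 'I_n} | #|S| == b) dotv (\sum_(i in S) w i) (\sum_(i in S) w i)
  <= c1 * \sum_i dotv (w i) (w i).
Proof.
move=> h0; rewrite sum2; have [c2 [c2ge0 hc2]] := cnt2_form.
under eq_bigr => i _ do under eq_bigr => j _ do rewrite hc2 mulrDl.
rewrite (eq_bigr (fun i => c2 * \sum_j dotv (w i) (w j) + (c1 - c2) * dotv (w i) (w i))); last first.
  move=> i _; rewrite big_split /= mulr_sumr; congr (_ + _).
  rewrite (bigD1 i) //= eqxx mul1r big1 ?addr0 //.
  by move=> j /negbTE; rewrite eq_sym => ->; rewrite mul0r mul0r.
rewrite big_split /= -mulr_sumr -mulr_sumr.
have -> : \sum_i \sum_j dotv (w i) (w j) = 0.
  under eq_bigr do rewrite -dotv_sumr.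
  by rewrite -dotv_suml h0 dotv0l.
rewrite mulr0 add0r ler_wpM2r //; last by rewrite lerBlDr lerDl.
by apply: sumr_ge0 => i _; exact: dotv_ge0.
Qed.

Lemma sum_center (w : 'I_n -> 'rV[R]_d) :
  \sum_i dotv (w i - wbar w) (w i - wbar w) =
  \sum_i dotv (w i) (w i) - n%:R * dotv (wbar w) (wbar w).
Proof.
have hn : (n%:R : R) != 0 by rewrite pnatr_eq0 -lt0n n_gt0.
have hSw : \sum_i w i = n%:R *: wbar w by rewrite /wbar scalerA mulfV // scale1r.
move: (wbar w) hSw => m hSw.
under eq_bigr do rewrite dotvBl !dotvBr.
rewrite !sumrB -dotv_suml -dotv_sumr hSw sumr_const card_ord dotvZl dotvZr.
rewrite -mulr_natl; ring.
Qed.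

Lemma V3 (w : 'I_n -> 'rV[R]_d) c :
  unif_avg b (fun S => dotv (mean S w + c) (mean S w + c)) <=
  dotv (wbar w + c) (wbar w + c) + (b%:R * n%:R)^-1 * \sum_i dotv (w i) (w i).
Proof.
have hn : (n%:R : R) != 0 by rewrite pnatr_eq0 -lt0n n_gt0.
have hb0 : (b%:R : R) != 0 by rewrite pnatr_eq0 -lt0n hb.
have hN : @NS R n b != 0 by rewrite gt_eqF // NS_gt0.
have hNp : 0 < @NS R n b by rewrite NS_gt0.
set m := wbar w; set w' := fun i => w i - m.
have hSw : \sum_i w i = n%:R *: m by rewrite /m /wbar scalerA mulfV // scale1r.
have hsum : \sum_i w' i = 0.
  by rewrite /w' sumrB sumr_const card_ord -scaler_nat hSw subrr.
have hmean : forall S : {set 'I_n}, #|S| = b -> mean S w = mean S w' + m.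
  move=> S hS; rewrite /mean /w' sumrB sumr_const scalerBr hS.
  by rewrite -[m *+ b]scaler_nat scalerA mulVf // scale1r subrK.
rewrite (@avg_eq b _ (fun S => dotv (mean S w') (mean S w') +
     (2 * dotv (mean S w' + 0) (m + c) + dotv (m + c) (m + c)))); last first.
  move=> S hS; rewrite hmean // addr0 -addrA.
  move: (mean S w') (m + c) => a q; rewrite dotvDl !dotvDr (dotvC q a); ring.
rewrite avgD avgD avgZ V1 avg_cst //.
have -> : wbar w' = 0 by rewrite /wbar hsum scaler0.
rewrite add0r dotv0l mulr0 add0r addrC lerD2l.
have hw' : \sum_i dotv (w' i) (w' i) <= \sum_i dotv (w i) (w i).
  rewrite /w' /m sum_center lerBlDr lerDl.
  by rewrite mulr_ge0 ?ler0n ?dotv_ge0.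
apply: le_trans (_ : (b%:R * n%:R)^-1 * \sum_i dotv (w' i) (w' i) <= _); last first.
  by rewrite ler_wpM2l // invr_ge0 mulr_ge0 // ler0n.
rewrite /unif_avg.
rewrite (eq_bigr (fun S : {set 'I_n} => (b%:R)^-1 * (b%:R)^-1 *
   dotv (\sum_(i in S) w' i) (\sum_(i in S) w' i))); last first.
  by move=> S /eqP hS; rewrite /mean hS dotvZl dotvZr mulrA.
rewrite -mulr_sumr.
have := V2 hsum => hV2.
rewrite -(@ler_pM2r _ (@NS R n b)) // mulrVK //.
apply: le_trans (_ : (b%:R)^-1 * (b%:R)^-1 * (c1 * \sum_i dotv (w' i) (w' i)) <= _).
  by rewrite ler_wpM2l // mulr_ge0 // invr_ge0 ler0n.
rewrite /c1 le_eqVlt; apply/orP; left; apply/eqP; field.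
  by rewrite hb0 hn.
by rewrite unitfE; exact: hN.
Qed.
End Var.

Section IE.
Variables (R : realType) (n d b : nat).
Hypothesis hbn : (b <= n)%N.
Variable st : {set 'I_n} -> 'rV[R]_d -> 'rV[R]_d.
Implicit Types (F G : 'rV[R]_d -> R).

Lemma IE_add F G k x : inner_exp b st (fun y => F y + G y) k x =
  inner_exp b st F k x + inner_exp b st G k x.
Proof.
elim: k x => [//|k IH] x /=.
rewrite -avgD; congr unif_avg; apply: funext => S; exact: IH.
Qed.
Lemma IE_scale a F k x : inner_exp b st (fun y => a * F y) k x =
  a * inner_exp b st F k x.
Proof.
elim: k x => [//|k IH] x /=.
rewrite -avgZ; congr unif_avg; apply: funext => S; exact: IH.
Qed.
Lemma IE_le F G k x : (forall y, F y <= G y) ->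
  inner_exp b st F k x <= inner_exp b st G k x.
Proof.
move=> h; elim: k x => [|k IH] x /=; first exact: h.
by apply: avg_le => S _; exact: IH.
Qed.
Lemma IE_cst c k x : inner_exp b st (fun _ => c) k x = c.
Proof.
elim: k x => [//|k IH] x /=.
rewrite -[RHS](@avg_cst R n b c hbn); congr unif_avg; apply: funext => S; exact: IH.
Qed.
Lemma IE_succ F k x : inner_exp b st F k.+1 x =
  inner_exp b st (fun y => unif_avg b (fun S => F (st S y))) k x.
Proof.
elim: k x => [//|k IH] x.
rewrite [LHS]/=; congr unif_avg; apply: funext => S; exact: IH.
Qed.
Lemma IE_lin3 a1 a2 a3 F1 F2 F3 k x :
  inner_exp b st (fun y => a1 * F1 y + (a2 * F2 y + a3 * F3 y)) k x =
  a1 * inner_exp b st F1 k x + (a2 * inner_exp b st F2 k x + a3 * inner_exp b st F3 k x).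
Proof. by rewrite !IE_add !IE_scale. Qed.
End IE.

Section Ser.
Variables (R : realType) (B b : nat).
Hypotheses (hB : (0 < B)%N) (hb : (0 < b)%N).

Local Notation gam := (geom_param R B b).
Local Notation p := (geom_pmf R B b).

Definition Jser (u : nat -> R) := limn (series (fun k => p k * u k)).
Definition cvs (u : nat -> R) := cvgn (series (fun k => p k * u k)).

Lemma gam_pos : 0 < gam.
Proof. by rewrite /geom_param divr_gt0 // ltr0n // addn_gt0 hB. Qed.
Lemma gam_lt1 : gam < 1.
Proof.
rewrite /geom_param ltr_pdivrMr ?mul1r ?ltr0n ?addn_gt0 ?hB //.
by rewrite ltr_nat -{1}(addn0 B) ltn_add2l.
Qed.
Lemma p_ge0 k : 0 <= p k.
Proof.
have h1 := gam_pos; have h2 := gam_lt1.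
by rewrite /geom_pmf mulr_ge0 // ?subr_ge0 ?exprn_ge0 // ltW.
Qed.
Lemma pS k : p k.+1 = gam * p k.
Proof. by rewrite /geom_pmf exprS; ring. Qed.
Lemma inv_gam : gam^-1 - 1 = b%:R / B%:R.
Proof.
have hB0 : (B%:R : R) != 0 by rewrite pnatr_eq0 -lt0n hB.
have hBb : ((B + b)%:R : R) != 0 by rewrite pnatr_eq0 -lt0n addn_gt0 hB.
rewrite /geom_param invf_div natrD; field.
exact: hB0.
Qed.

Lemma cvsD u v : cvs u -> cvs v -> cvs (fun k => u k + v k).
Proof.
move=> hu hv; rewrite /cvs.
have -> : (fun k => p k * (u k + v k)) =
  (fun k => p k * u k) + (fun k => p k * v k).
  by apply: funext => k /=; rewrite mulrDr.
exact: is_cvg_seriesD.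
Qed.
Lemma JD u v : cvs u -> cvs v -> Jser (fun k => u k + v k) = Jser u + Jser v.
Proof.
move=> hu hv; rewrite /Jser.
have -> : (fun k => p k * (u k + v k)) =
  (fun k => p k * u k) + (fun k => p k * v k).
  by apply: funext => k /=; rewrite mulrDr.
exact: lim_seriesD.
Qed.
Lemma cvsZ a u : cvs u -> cvs (fun k => a * u k).
Proof.
move=> hu; rewrite /cvs.
have -> : (fun k => p k * (a * u k)) = a *: (fun k => p k * u k).
  by apply: funext => k /=; rewrite mulrCA.
exact: is_cvg_seriesZ.
Qed.
Lemma JZ a u : cvs u -> Jser (fun k => a * u k) = a * Jser u.
Proof.
move=> hu; rewrite /Jser.
have -> : (fun k => p k * (a * u k)) = a *: (fun k => p k * u k).
  by apply: funext => k /=; rewrite mulrCA.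
exact: lim_seriesZ.
Qed.
Lemma J_le u v : cvs u -> cvs v -> (forall k, u k <= v k) -> Jser u <= Jser v.
Proof.
move=> hu hv h; apply: lim_series_le => // k.
by rewrite ler_wpM2l // p_ge0.
Qed.
Lemma cvs_cmp u v : cvs v -> (forall k, - v k <= u k <= v k) -> cvs u.
Proof.
move=> hv h.
have h1 : cvs (fun k => u k + v k).
  apply: (@series_le_cvg _ _ (fun k => p k * (2 * v k))).
  - move=> k; rewrite mulr_ge0 ?p_ge0 //; have := h k; lra.
  - move=> k; rewrite mulr_ge0 ?p_ge0 //; have := h k; lra.
  - move=> k; rewrite ler_wpM2l ?p_ge0 //; have := h k; lra.
  - exact: (cvsZ (a := 2) hv).
rewrite /cvs (_ : (fun k => p k * u k) = (fun k => p k * (u k + v k + -1 * v k))).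
  exact: (cvsD h1 (cvsZ (a := -1) hv)).
by apply: funext => k; congr (_ * _); ring.
Qed.
Lemma cvs_cst c : cvs (fun _ => c) /\ Jser (fun _ => c) = c.
Proof.
have h1 := gam_pos; have h2 := gam_lt1.
have e : (fun k => p k * c) = geometric ((1 - gam) * c) gam.
  by apply: funext => k; rewrite /geom_pmf /geometric /=; ring.
have hc : (series (fun k => p k * c) @ \oo --> c)%classic.
  rewrite e.
  have hz : `|gam| < 1 by rewrite ger0_norm ?ltW.
  have := @cvg_geometric_series R ((1 - gam) * c) gam hz.
  have -> // : (1 - gam) * c * (1 - gam)^-1 = c.
  by field; rewrite subr_eq0 gt_eqF.
split; first exact: cvgP hc.
exact: cvg_lim hc.
Qed.
Lemma shift u : cvs u -> cvs (fun k => u k.+1) /\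
  Jser (fun k => u k.+1) = gam^-1 * (Jser u - p 0 * u 0).
Proof.
move=> hu.
have hg : gam != 0 by rewrite gt_eqF // gam_pos.
have E : series (fun k => p k * u k.+1) =
   (fun n => gam^-1 * (series (fun k => p k * u k) n.+1 - p 0 * u 0)).
  apply: funext => n; rewrite /series /= big_nat_recl // addrAC subrr add0r.
  rewrite mulr_sumr; apply: eq_bigr => k _; rewrite pS; field; exact: hg.
have hc : (series (fun k => p k * u k.+1) @ \oo -->
     gam^-1 * (Jser u - p 0 * u 0))%classic.
  rewrite E; apply: cvgMl_tmp.
  apply: (cvgB (f := fun n => series (fun k => p k * u k) n.+1) (g := fun _ => p 0 * u 0)).
    by rewrite cvg_shiftS; exact: hu.
  exact: cvg_cst.
split; first exact: cvgP hc.
exact: cvg_lim hc.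
Qed.
End Ser.

Section Main.
Variables (R : realType) (n d : nat) (gradf : 'I_n -> 'rV[R]_d -> 'rV[R]_d).
Variables (L lam eta : R) (b : nat) (x0 : 'rV[R]_d).
Hypotheses (hb : (0 < b)%N) (hbn : (b <= n)%N).
Hypothesis hLip : forall i, L_lipschitz_grad L (gradf i).

Lemma Lip2 i x y : dotv (gradf i x - gradf i y) (gradf i x - gradf i y) <=
  L ^+ 2 * dotv (x - y) (x - y).
Proof.
have h := hLip i x y.
rewrite -!enorm2 -exprMn !expr2; apply: ler_pM => //; exact: sqrtr_ge0.
Qed.

Lemma gF_lip x : dotv (grad_full gradf x - grad_full gradf x0)
  (grad_full gradf x - grad_full gradf x0) <= L ^+ 2 * dotv (x - x0) (x - x0).
Proof.
have hn0 := n_gt0 hb hbn.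
have hn : (n%:R : R) != 0 by rewrite pnatr_eq0 -lt0n hn0.
set w := fun i => gradf i x - gradf i x0.
have e : grad_full gradf x - grad_full gradf x0 = wbar w.
  by rewrite /grad_full /wbar /w sumrB scalerBr.
rewrite e.
have h := sum_center hb hbn w.
have h1 : 0 <= \sum_i dotv (w i - wbar w) (w i - wbar w).
  by apply: sumr_ge0 => i _; exact: dotv_ge0.
have h2 : \sum_i dotv (w i) (w i) <= \sum_(i < n) L ^+ 2 * dotv (x - x0) (x - x0).
  by apply: ler_sum => i _; exact: Lip2.
rewrite sumr_const card_ord in h2.
have hnp : (0 : R) < n%:R by rewrite ltr0n.
rewrite -(@ler_pM2l _ n%:R) //.
rewrite -mulr_natl in h2.
move: (dotv (wbar w) (wbar w)) h h1 h2 => z h h1 h2.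
lra.
Qed.

Lemma point (g x : 'rV[R]_d) :
  unif_avg b (fun S => enorm (alg3_step gradf lam eta x0 g S x - x0) ^+ 2)
  - enorm (x - x0) ^+ 2
  + 2 * eta * ((1 - lam) * dotv (grad_full gradf x) (x - x0)
       + dotv (lam *: g - (1 - lam) *: grad_full gradf x0) (x - x0))
  <= eta ^+ 2 * ((1 - lam) ^+ 2 * L ^+ 2 * enorm (x - x0) ^+ 2 / b%:R
       + 2 * (1 - lam) ^+ 2 * enorm (grad_full gradf x) ^+ 2
       + 2 * enorm (lam *: g - (1 - lam) *: grad_full gradf x0) ^+ 2).
Proof.
set e := lam *: g - (1 - lam) *: grad_full gradf x0.
set gF := grad_full gradf.
have hn0 := n_gt0 hb hbn.
have hn : (n%:R : R) != 0 by rewrite pnatr_eq0 -lt0n hn0.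
have hb0 : (b%:R : R) != 0 by rewrite pnatr_eq0 -lt0n hb.
have hnp : (0 : R) < n%:R by rewrite ltr0n.
have hbp : (0 : R) < b%:R by rewrite ltr0n.
set y := x - x0.
set w := fun i => (1 - lam) *: (gradf i x - gradf i x0).
set c := lam *: g.
set m := (1 - lam) *: gF x + e.
have hm : wbar w + c = m.
  rewrite /m /e /gF /wbar /w /grad_full -scaler_sumr sumrB scalerA mulrC -scalerA.
  rewrite scalerBr /c.
  by rewrite scalerBr [RHS]addrA addrAC.
have hv : forall S, alg3_step gradf lam eta x0 g S x - x0 = y - eta *: (mean S w + c).
  move=> S; rewrite /alg3_step /mean /w /grad_batch /y /c.
  rewrite -scaler_sumr sumrB scalerA mulrC -scalerA scalerBr.
  by rewrite [in RHS]scalerBr [in RHS]scalerBr addrAC.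
rewrite !enorm2.
have -> : (fun S => enorm (alg3_step gradf lam eta x0 g S x - x0) ^+ 2) =
   (fun S => dotv y y + ((- 2 * eta) * dotv (mean S w + c) y +
                         eta ^+ 2 * dotv (mean S w + c) (mean S w + c))).
  apply: funext => S; rewrite enorm2 hv.
  move: (mean S w + c) => v.
  rewrite !dotvBl !dotvBr !dotvZl !dotvZr (dotvC x v) (dotvC x0 v); ring.
rewrite avgD avgD avgZ avgZ (avg_cst _ hbn) (V1 hb hbn) hm.
have h3 := V3 hb hbn w c; rewrite hm in h3.
have hs : \sum_i dotv (w i) (w i) <= (1 - lam) ^+ 2 * (L ^+ 2 * dotv y y) * n%:R.
  rewrite mulr_natr.
  apply: le_trans (_ : _ <= \sum_(i < n) (1 - lam) ^+ 2 * (L ^+ 2 * dotv y y)) _; last first.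
    by rewrite sumr_const card_ord.
  apply: ler_sum => i _; rewrite /w dotvZl dotvZr mulrA -expr2.
  rewrite ler_wpM2l ?sqr_ge0 //; exact: Lip2.
have hmm : dotv m m <= 2 * (1 - lam) ^+ 2 * dotv (gF x) (gF x) + 2 * dotv e e.
  apply: le_trans (dotv_sq2 _ _) _.
  by rewrite dotvZl dotvZr le_eqVlt; apply/orP; left; apply/eqP; ring.
have hmy : dotv m y = (1 - lam) * dotv (gF x) y + dotv e y.
  by rewrite /m dotvDl dotvZl.
rewrite hmy.
set A := unif_avg b _ in h3 *.
have hA : A <= (1 - lam) ^+ 2 * L ^+ 2 * dotv y y / b%:R +
          2 * (1 - lam) ^+ 2 * dotv (gF x) (gF x) + 2 * dotv e e.
  apply: le_trans h3 _.
  have : (b%:R * n%:R)^-1 * \sum_i dotv (w i) (w i) <=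
         (1 - lam) ^+ 2 * L ^+ 2 * dotv y y / b%:R.
    rewrite ler_pdivrMl ?mulr_gt0 //.
    apply: le_trans hs _; rewrite le_eqVlt; apply/orP; left; apply/eqP; field.
    exact: hb0.
  lra.
have he2 : 0 <= eta ^+ 2 by rewrite sqr_ge0.
have := ler_wpM2l he2 hA.
set P := (1 - lam) * dotv (gF x) y + dotv e y.
move=> hfin.
have -> : dotv y y + (- 2 * eta * P + eta ^+ 2 * A) - dotv y y + 2 * eta * P
   = eta ^+ 2 * A by ring.
exact: hfin.
Qed.
End Main.

Section Glue.
Variables (R : realType) (n d B b : nat).
Hypotheses (hB : (0 < B)%N) (hb : (0 < b)%N) (hbn : (b <= n)%N).
Variable st : {set 'I_n} -> 'rV[R]_d -> 'rV[R]_d.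
Variable x0 : 'rV[R]_d.

Local Notation IE F := (fun k => inner_exp b st F k x0).
Local Notation cv := (@cvs R B b).
Local Notation J := (@Jser R B b).

Lemma lin3 (a1 a2 a3 : R) u1 u2 u3 : cv u1 -> cv u2 -> cv u3 ->
  cv (fun k => a1 * u1 k + (a2 * u2 k + a3 * u3 k)) /\
  J (fun k => a1 * u1 k + (a2 * u2 k + a3 * u3 k)) = a1 * J u1 + (a2 * J u2 + a3 * J u3).
Proof.
move=> h1 h2 h3.
have c1 := cvsZ (a := a1) h1; have c2 := cvsZ (a := a2) h2; have c3 := cvsZ (a := a3) h3.
have c23 := cvsD c2 c3.
split; first exact: cvsD c1 c23.
by rewrite JD // JD // !JZ.
Qed.

Lemma cv_IE2 (a c : R) F G : cv (IE F) -> cv (IE G) ->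
  cv (IE (fun x => a * F x + c * G x)).
Proof.
move=> hF hG.
have -> : IE (fun x => a * F x + c * G x) = (fun k => a * IE F k + c * IE G k).
  by apply: funext => k; rewrite IE_add !IE_scale.
exact: cvsD (cvsZ hF) (cvsZ hG).
Qed.

Lemma cv_IEcst (c : R) : cv (IE (fun _ => c)).
Proof.
have -> : IE (fun _ => c) = (fun _ => c).
  by apply: funext => k; rewrite IE_cst.
by case: (@cvs_cst R B b hB hb c).
Qed.

Lemma cv_bound F M : cv (IE M) -> (forall x, `|F x| <= M x) -> cv (IE F).
Proof.
move=> hM h; apply: (cvs_cmp hB hb hM) => k; apply/andP; split.
  rewrite -mulN1r -IE_scale; apply: IE_le => x.
  by rewrite mulN1r; have := h x; rewrite ler_norml => /andP[].
apply: IE_le => x; exact: le_trans (ler_norm _) (h x).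
Qed.
End Glue.

Lemma avg_comb (R : realType) (n m : nat) (F0 F1 F2 F3 F4 : {set 'I_n} -> R)
  (c0 c1 c2 c3 c4 : R) :
  (forall S : {set 'I_n}, #|S| = m ->
     c0 * F0 S + c1 * F1 S <= c2 * F2 S + c3 * F3 S + c4 * F4 S) ->
  c0 * unif_avg m F0 + c1 * unif_avg m F1 <=
  c2 * unif_avg m F2 + c3 * unif_avg m F3 + c4 * unif_avg m F4.
Proof.
move=> h; rewrite -!avgZ -!avgD.
by apply: avg_le => S hS /=; exact: h.
Qed.

Section Fin.
Variables (R : realType) (n d : nat) (gradf : 'I_n -> 'rV[R]_d -> 'rV[R]_d).
Variables (L lam eta : R) (B b : nat) (x0 : 'rV[R]_d).
Hypotheses (hB : (0 < B)%N) (hb : (0 < b)%N) (hbn : (b <= n)%N).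
Hypothesis hLip : forall i, L_lipschitz_grad L (gradf i).
Hypothesis heta : 0 < eta.

Lemma perI (I : {set 'I_n}) :
  let st := alg3_step gradf lam eta x0 (grad_batch gradf I x0) in
  let e := err_j gradf lam x0 I in
  let gF := grad_full gradf in
  cvs B b (fun k => inner_exp b st (fun x => enorm (x - x0) ^+ 2) k x0) ->
  (b%:R - (1 - lam) ^+ 2 * eta ^+ 2 * L ^+ 2 * B%:R / b%:R)
      * Jser B b (fun k => inner_exp b st (fun x => enorm (x - x0) ^+ 2) k x0)
    + 2 * eta * B%:R * Jser B b (fun k => inner_exp b st (fun x => dotv e (x - x0)) k x0)
  <= - (2 * (1 - lam) * eta * B%:R)
        * Jser B b (fun k => inner_exp b st (fun x => dotv (gF x) (x - x0)) k x0)
     + 2 * (1 - lam) ^+ 2 * eta ^+ 2 * B%:R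
        * Jser B b (fun k => inner_exp b st (fun x => enorm (gF x) ^+ 2) k x0)
     + 2 * eta ^+ 2 * B%:R
        * Jser B b (fun k => inner_exp b st (fun x => enorm e ^+ 2) k x0).
Proof.
move=> st e gF cvD.
set D := fun x => enorm (x - x0) ^+ 2.
set Ge := fun x => dotv e (x - x0).
set Gg := fun x => dotv (gF x) (x - x0).
set Gn := fun x => enorm (gF x) ^+ 2.
set Ce := fun x : 'rV[R]_d => enorm e ^+ 2.
set T := fun x => unif_avg b (fun S => D (st S x)).
have hT : (fun k => inner_exp b st T k x0) = (fun k => inner_exp b st D k.+1 x0).
  by apply: funext => k; rewrite IE_succ.
have [cvT JT] := shift hB cvD.
rewrite -hT in cvT JT.
have uD0 : inner_exp b st D 0 x0 = 0.
  by rewrite /= /D subrr /enorm dotv0l sqrtr0 expr0n.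
rewrite uD0 mulr0 subr0 in JT.
have cvCe : cvs B b (fun k => inner_exp b st Ce k x0) by exact: (cv_IEcst hB hb hbn).
have cvGe : cvs B b (fun k => inner_exp b st Ge k x0).
  apply: (cv_bound hB hb (M := (fun x => 2^-1 * Ce x + 2^-1 * D x))).
    exact: cv_IE2.
  move=> x; rewrite /Ge /Ce /D !enorm2.
  by apply: le_trans (dotv_abs _ _) _; rewrite le_eqVlt; apply/orP; left; apply/eqP; ring.
have cvGn : cvs B b (fun k => inner_exp b st Gn k x0).
  apply: (cv_bound hB hb (M := (fun x => 2 * (fun _ => enorm (gF x0) ^+ 2) x + (2 * L ^+ 2) * D x))).
    by apply: cv_IE2 => //; exact: (cv_IEcst hB hb hbn).
  move=> x; rewrite /Gn /D /= !enorm2 ger0_norm ?dotv_ge0 //.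
  have -> : gF x = (gF x - gF x0) + gF x0 by rewrite subrK.
  apply: le_trans (dotv_sq2 _ _) _.
  have := gF_lip x0 hb hbn hLip x; rewrite -/gF => h.
  lra.
have cvGg : cvs B b (fun k => inner_exp b st Gg k x0).
  apply: (cv_bound hB hb (M := (fun x => 2^-1 * Gn x + 2^-1 * D x))).
    exact: cv_IE2.
  move=> x; rewrite /Gg /Gn /D !enorm2.
  by apply: le_trans (dotv_abs _ _) _; rewrite le_eqVlt; apply/orP; left; apply/eqP; ring.
have hpt : forall x,
   B%:R * T x + (2 * eta * B%:R * (1 - lam) * Gg x + 2 * eta * B%:R * Ge x) <=
   (B%:R + (1 - lam) ^+ 2 * eta ^+ 2 * L ^+ 2 * B%:R / b%:R) * D x +
   (2 * (1 - lam) ^+ 2 * eta ^+ 2 * B%:R * Gn x + 2 * eta ^+ 2 * B%:R * Ce x).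
  move=> x.
  have hp : T x - D x + 2 * eta * ((1 - lam) * Gg x + Ge x) <=
     eta ^+ 2 * ((1 - lam) ^+ 2 * L ^+ 2 * D x / b%:R + 2 * (1 - lam) ^+ 2 * Gn x
       + 2 * Ce x).
    exact: (point lam eta x0 hb hbn hLip (grad_batch gradf I x0) x).
  have hB0 : (0 : R) <= B%:R by rewrite ler0n.
  have := ler_wpM2l hB0 hp.
  move: (T x) (D x) (Gg x) (Ge x) (Gn x) (Ce x) => t dx gg ge gn ce h.
  rewrite !mulrA in h *.
  lra.
have hseq : forall k,
   B%:R * inner_exp b st T k x0 + (2 * eta * B%:R * (1 - lam) * inner_exp b st Gg k x0
      + 2 * eta * B%:R * inner_exp b st Ge k x0) <=
   (B%:R + (1 - lam) ^+ 2 * eta ^+ 2 * L ^+ 2 * B%:R / b%:R) * inner_exp b st D k x0 +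
   (2 * (1 - lam) ^+ 2 * eta ^+ 2 * B%:R * inner_exp b st Gn k x0
      + 2 * eta ^+ 2 * B%:R * inner_exp b st Ce k x0).
  move=> k; rewrite -!IE_lin3; exact: IE_le.
have [cv1 J1] := lin3 B%:R (2 * eta * B%:R * (1 - lam)) (2 * eta * B%:R) cvT cvGg cvGe.
have [cv2 J2] := lin3 (B%:R + (1 - lam) ^+ 2 * eta ^+ 2 * L ^+ 2 * B%:R / b%:R)
   (2 * (1 - lam) ^+ 2 * eta ^+ 2 * B%:R) (2 * eta ^+ 2 * B%:R) cvD cvGn cvCe.
have := J_le hB hb cv1 cv2 hseq.
rewrite J1 J2 JT.
have hBg : B%:R * (geom_param R B b)^-1 = B%:R + b%:R.
  have hB0 : (B%:R : R) != 0 by rewrite pnatr_eq0 -lt0n hB.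
  have := inv_gam R b hB.
  move=> h; have -> : (geom_param R B b)^-1 = 1 + b%:R / B%:R by rewrite -h; ring.
  by field.
rewrite mulrA hBg.
move: (Jser B b _) => X.
lra.
Qed.
End Fin.

Theorem lemmaB9 (R : realType) (n d : nat)
    (f : 'I_n -> 'rV[R]_d -> R) (gradf : 'I_n -> 'rV[R]_d -> 'rV[R]_d)
    (L lam eta : R) (B b : nat) (x0 : 'rV[R]_d) :
  (forall i, is_gradient (f i) (gradf i)) ->
  (forall i, L_lipschitz_grad L (gradf i)) ->
  (0 < B <= n)%N -> (0 < b <= n)%N ->
  0 < lam < 1 -> 0 < eta ->
  eta ^+ 2 * L ^+ 2 * B%:R < b%:R ^+ 2 ->
  finite_second_moment gradf lam eta B b x0 ->
  let E := epoch_exp gradf lam eta B b x0 in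
  let e := err_j gradf lam x0 in
  let gF := grad_full gradf in
  (b%:R - (1 - lam) ^+ 2 * eta ^+ 2 * L ^+ 2 * B%:R / b%:R)
      * E (fun I x => enorm (x - x0) ^+ 2)
    + 2 * eta * B%:R * E (fun I x => dotv (e I) (x - x0))
  <= - (2 * (1 - lam) * eta * B%:R) * E (fun I x => dotv (gF x) (x - x0))
     + 2 * (1 - lam) ^+ 2 * eta ^+ 2 * B%:R * E (fun I x => enorm (gF x) ^+ 2)
     + 2 * eta ^+ 2 * B%:R * E (fun I x => enorm (e I) ^+ 2).
Proof.
move=> _ hLip /andP[hB _] /andP[hb hbn] _ heta _ hfin.
cbv zeta.
rewrite /epoch_exp.
apply: avg_comb => I hI.
exact: (perI hB hb hbn hLip (hfin I hI)).
Qed.
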